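(* Let $d\ge 2$, $n,R\ge1$, and let ${\bf A}=\sum_{\nu=1}^R \xi_\nu\, {\bf u}^{(1)}_\nu\otimes\cdots\otimes{\bf u}^{(d)}_\nu\in\mathbb{R}^{n\times\cdots\times n}$ with $\xi_\nu\in\mathbb{R}$ and normalized skeleton vectors $\|{\bf u}^{(\ell)}_\nu\|=1$. For $\ell=1,\dots,d$ let $U^{(\ell)}=[{\bf u}^{(\ell)}_1,\dots,{\bf u}^{(\ell)}_R]\in\mathbb{R}^{n\times R}$ have singular values $\sigma_{\ell,1}\ge\sigma_{\ell,2}\ge\cdots\ge\sigma_{\ell,\min(n,R)}$, let $r_\ell\le\min(n,R)$, and let $W^{(\ell)}=Z^{(\ell)}_0D_{\ell,0}{V^{(\ell)}_0}^T$ be the rank-$r_\ell$ truncated SVD of $U^{(\ell)}$. Let ${\bf A}^0_{({\bf r})}=\boldsymbol{\xi}\times_1W^{(1)}\times_2\cdots\times_dW^{(d)}$ be the RHOSVD approximation, where $\boldsymbol{\xi}$ is the diagonal tensor with diagonal entries $\xi_1,\dots,\xi_R$. Norms are Frobenius (Euclidean) norms. (A) If one of the matrices $U^{(\ell)}$, say $U^{(1)}$, is orthogonal (its columns are mutually orthogonal), then $$\|{\bf A}-{\bf A}^0_{({\bf r})}\|\le C\,\|{\bf A}\|\sum_{\ell=1}^d\Big(\sum_{k=r_\ell+1}^{\min(n,R)}\sigma_{\ell,k}^2\Big)^{1/2}$$ with $C=1$. (B) If the decomposition is monotone, i.e., all coefficients $\xi_\nu$ and all entries of all skeleton vectors ${\bf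 u}^{(\ell)}_\nu$ are non-negative, then the same inequality holds with a constant $C$ that does not depend on ${\bf A}$.
   Context: For a tensor ${\bf T}$ and matrix $M$, ${\bf T}\times_\ell M$ denotes the $\ell$-mode product (multiplying every mode-$\ell$ fiber of ${\bf T}$ by $M$). The rank-$r_\ell$ truncated SVD of $U^{(\ell)}$ is $Z^{(\ell)}_0D_{\ell,0}{V^{(\ell)}_0}^T$, with $Z^{(\ell)}_0\in\mathbb{R}^{n\times r_\ell}$, $V^{(\ell)}_0\in\mathbb{R}^{R\times r_\ell}$ the leading left and right singular vectors and $D_{\ell,0}=\mathrm{diag}(\sigma_{\ell,1},\dots,\sigma_{\ell,r_\ell})$. *)

(* Defs.v *)
From mathcomp Require Import all_boot all_order all_algebra.
From mathcomp Require Import reals.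
Set Implicit Arguments. Unset Strict Implicit. Unset Printing Implicit Defensive.
Import Order.TTheory GRing.Theory Num.Theory.
Local Open Scope ring_scope.

(* An order-d tensor in K^{n x ... x n}: a function of a multi-index
   i : {ffun 'I_d -> 'I_n} (i l is the l-th index, l = 0..d-1). *)
Definition tensor (K : Type) (d n : nat) := {ffun 'I_d -> 'I_n} -> K.

Definition tnorm (K : rcfType) (d n : nat) (T : tensor K d n) : K :=
  Num.sqrt (\sum_(i : {ffun 'I_d -> 'I_n}) T i ^+ 2).

(* Tucker/CP product  xi x_1 M_1 x_2 ... x_d M_d  with xi the diagonal
   R x ... x R tensor with diagonal xi_0..xi_{R-1}, M_l : n x R.
   Entry i = sum_nu xi_nu prod_l M_l(i_l, nu). *)
Definition diag_tucker (K : rcfType) (d n R : nat) (xi : 'I_R -> K)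
  (M : 'I_d -> 'M[K]_(n, R)) : tensor K d n :=
  fun i => \sum_(nu < R) xi nu * \prod_(l < d) M l (i l) nu.

Definition rdiag (K : rcfType) (n R : nat) (s : nat -> K) (r : nat) : 'M[K]_(n, R) :=
  \matrix_(i < n, j < R) (if ((i : nat) == j) && (i < r)%N then s i else 0).

(* (Z, s, V) is a singular value decomposition of U : n x R:
   Z (n x n) and V (R x R) orthogonal, s the singular values
   s 0 >= s 1 >= ... >= s (min(n,R)-1) >= 0 (0-based indexing:
   s k = sigma_{k+1}), and U = Z * Sigma * V^T. *)
Definition is_svd (K : rcfType) (n R : nat) (U : 'M[K]_(n, R))
  (Z : 'M[K]_n) (s : nat -> K) (V : 'M[K]_R) : Prop :=
  [/\ Z^T *m Z = 1%:M, V^T *m V = 1%:M,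
      (forall k, (k < minn n R)%N -> 0 <= s k),
      (forall k k', (k <= k')%N -> (k' < minn n R)%N -> s k' <= s k)
    & U = Z *m rdiag n R s (minn n R) *m V^T].

(* The rank-r truncated SVD  Z_0 D_0 V_0^T  built from an SVD (Z, s, V):
   written with the full factors and the diagonal cut after r entries. *)
Definition trunc_svd (K : rcfType) (n R : nat) (Z : 'M[K]_n) (s : nat -> K)
  (V : 'M[K]_R) (r : nat) : 'M[K]_(n, R) :=
  Z *m rdiag n R s r *m V^T.

(* Main.v *)
Require Import Defs.
From mathcomp Require Import all_boot all_order all_algebra.
From mathcomp Require Import reals.
From mathcomp Require Import ring lra.
Import Order.TTheory GRing.Theory Num.Theory.
Local Open Scope ring_scope.

Set Implicit Arguments. Unset Strict Implicit. Unset Printing Implicit Defensive.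


Section Nrm.
Variable K : rcfType.

Definition nrm (I : finType) (f : I -> K) : K := Num.sqrt (\sum_i f i ^+ 2).

Lemma nrm_ge0 (I : finType) (f : I -> K) : 0 <= nrm f.
Proof. exact: sqrtr_ge0. Qed.

Lemma sumsq_ge0 (I : finType) (f : I -> K) : 0 <= \sum_i f i ^+ 2.
Proof. by apply: sumr_ge0 => i _; exact: sqr_ge0. Qed.

Lemma nrm_sq (I : finType) (f : I -> K) : nrm f ^+ 2 = \sum_i f i ^+ 2.
Proof. by rewrite sqr_sqrtr // sumsq_ge0. Qed.

Lemma lagrange (I : finType) (a b : I -> K) :
  (\sum_i a i * b i) ^+ 2 <= (\sum_i a i ^+ 2) * (\sum_i b i ^+ 2).
Proof.
have H : 0 <= \sum_i \sum_j (a i * b j - a j * b i) ^+ 2.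
  by apply: sumr_ge0 => i _; apply: sumr_ge0 => j _; exact: sqr_ge0.
have E : \sum_i \sum_j (a i * b j - a j * b i) ^+ 2 =
   2 * ((\sum_i a i ^+ 2) * (\sum_i b i ^+ 2) - (\sum_i a i * b i) ^+ 2).
  have E1 : (\sum_i a i ^+ 2) * (\sum_i b i ^+ 2) = \sum_i \sum_j a i ^+ 2 * b j ^+ 2.
    by rewrite big_distrl /=; apply: eq_bigr => i _; rewrite big_distrr.
  have E2 : (\sum_i a i * b i) ^+ 2 = \sum_i \sum_j (a i * b i) * (a j * b j).
    by rewrite expr2 big_distrl /=; apply: eq_bigr => i _; rewrite big_distrr.
  have E3 : \sum_i \sum_j a j ^+ 2 * b i ^+ 2 = \sum_i \sum_j a i ^+ 2 * b j ^+ 2.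
    by rewrite exchange_big.
  rewrite E1 E2 mulrBr !mulr2n !mulrDl !mul1r.
  rewrite -{2}E3 -!big_split -sumrB /=.
  apply: eq_bigr => i _; rewrite -!big_split -sumrB /=; apply: eq_bigr => j _.
  ring.
rewrite E in H.
by rewrite -subr_ge0 -(pmulr_rge0 _ (ltr0Sn K 1)).
Qed.

Lemma CS (I : finType) (a b : I -> K) : \sum_i a i * b i <= nrm a * nrm b.
Proof.
case: (lerP (\sum_i a i * b i) 0) => h.
  by apply: le_trans h _; apply: mulr_ge0; apply: nrm_ge0.
rewrite /nrm -sqrtrM ?sumsq_ge0 //.
rewrite -(ger0_norm (ltW h)) -sqrtr_sqr ler_sqrt ?lagrange //.
by apply: mulr_ge0; apply: sumsq_ge0.
Qed.

Lemma nrm_triangle (I : finType) (f g : I -> K) :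
  nrm (fun i => f i + g i) <= nrm f + nrm g.
Proof.
rewrite {1}/nrm -(ger0_norm (addr_ge0 (nrm_ge0 f) (nrm_ge0 g))) -sqrtr_sqr.
rewrite ler_sqrt; last exact: sqr_ge0.
have -> : \sum_i (f i + g i) ^+ 2 =
   \sum_i f i ^+ 2 + 2 * \sum_i f i * g i + \sum_i g i ^+ 2.
  rewrite mulr_sumr -!big_split /=; apply: eq_bigr => i _; ring.
rewrite sqrrD !nrm_sq -!addrA lerD2l !addrA lerD2r -mulr2n -mulr_natl.
by rewrite mulr1 mulr2n; have := CS f g; lra.
Qed.

Lemma nrm0 (I : finType) : nrm (fun _ : I => (0 : K)) = 0.
Proof. by rewrite /nrm big1 ?sqrtr0 // => i _; rewrite expr0n. Qed.

Lemma nrm_ext (I : finType) (f g : I -> K) : f =1 g -> nrm f = nrm g.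
Proof. by move=> e; rewrite /nrm; congr Num.sqrt; apply: eq_bigr => i _; rewrite e. Qed.

Lemma nrm_sum (I J : finType) (F : J -> I -> K) :
  nrm (fun i => \sum_j F j i) <= \sum_j nrm (F j).
Proof.
elim: (index_enum J) => [|j r IH].
  by rewrite big_nil (nrm_ext (g := fun _ => 0)) ?nrm0 // => i; rewrite big_nil.
rewrite big_cons (nrm_ext (g := fun i => F j i + \sum_(j <- r) F j i)); last first.
  by move=> i; rewrite big_cons.
by apply: le_trans (nrm_triangle _ _) _; rewrite lerD2l.
Qed.

Lemma nrm_scale (I : finType) (c : K) (f : I -> K) :
  nrm (fun i => c * f i) = `|c| * nrm f.
Proof.
rewrite /nrm (eq_bigr (fun i => c ^+ 2 * f i ^+ 2)); last by move=> i _; rewrite exprMn.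
by rewrite -mulr_sumr sqrtrM ?sqr_ge0 // sqrtr_sqr.
Qed.

Lemma nrm_abs (I : finType) (f : I -> K) : nrm (fun i => `|f i|) = nrm f.
Proof. by rewrite /nrm; congr Num.sqrt; apply: eq_bigr => i _; rewrite real_normK // num_real. Qed.

Lemma sqrt_prod (I : finType) (x : I -> K) : (forall i, 0 <= x i) ->
  Num.sqrt (\prod_i x i) = \prod_i Num.sqrt (x i).
Proof.
move=> hx.
suff [] : 0 <= \prod_i x i /\ Num.sqrt (\prod_i x i) = \prod_i Num.sqrt (x i) by [].
apply: (big_ind2 (fun a b => 0 <= a /\ Num.sqrt a = b)) => //.
- by rewrite sqrtr1.
- move=> a1 a2 b1 b2 [ha1 <-] [hb1 <-]; split; first exact: mulr_ge0.
  by rewrite sqrtrM.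
Qed.

Lemma nrm_rank1 (d n : nat) (f : 'I_d -> 'I_n -> K) :
  nrm (fun i : {ffun 'I_d -> 'I_n} => \prod_l f l (i l)) = \prod_l nrm (f l).
Proof.
rewrite /nrm (eq_bigr (fun i : {ffun 'I_d -> 'I_n} => \prod_l f l (i l) ^+ 2)); last first.
  by move=> i _; rewrite prodrXl.
rewrite -(bigA_distr_bigA (fun l j => f l j ^+ 2)) sqrt_prod //.
by move=> l; exact: sumsq_ge0.
Qed.

End Nrm.


Section SVD.
Variables (K : rcfType) (n R : nat) (U : 'M[K]_(n, R)) (Z : 'M[K]_n) (s : nat -> K)
  (V : 'M[K]_R) (r : nat).
Hypothesis hsvd : is_svd U Z s V.
Hypothesis hr : (r <= minn n R)%N.

Let m := minn n R.
Let D := rdiag n R s m - rdiag n R s r.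
Let W := trunc_svd Z s V r.

Lemma UW_E : U - W = Z *m D *m V^T.
Proof.
case: hsvd => _ _ _ _ ->.
by rewrite /W /trunc_svd /D mulmxBr mulmxBl.
Qed.

Lemma SrD : (rdiag n R s r)^T *m D = 0.
Proof.
apply/matrixP => a b; rewrite !mxE big1 // => i _.
rewrite !mxE.
case: (ltnP i r) => hir.
  have him : (i < m)%N by apply: leq_trans hir hr.
  by rewrite him !andbT subrr mulr0.
by rewrite andbF mul0r.
Qed.

Lemma WE_orth nu : \sum_i W i nu * (U i nu - W i nu) = 0.
Proof.
have : (W^T *m (U - W)) nu nu = 0.
  rewrite UW_E /W /trunc_svd !trmx_mul trmxK.
  case: hsvd => hZ _ _ _ _.
  rewrite !mulmxA -[V *m _ *m _ *m Z]mulmxA hZ mulmx1.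
  by rewrite -[V *m _ *m D]mulmxA SrD mulmx0 mul0mx mxE.
move=> h; rewrite -[RHS]h mxE; apply: eq_bigr => i _; by rewrite !mxE.
Qed.


Lemma DE i j : D i j = if [&& (i == j :> nat), (r <= i)%N & (i < m)%N] then s i else 0.
Proof.
rewrite /D !mxE; case: (i == j :> nat) => //=; last by rewrite subrr.
case: (ltnP i r) => h /=.
  by rewrite (leq_trans h hr) subrr.
by case: (i < m)%N; rewrite subr0.
Qed.

Lemma row_sum (i : 'I_n) : \sum_(j < R) D i j ^+ 2 =
  if (r <= i < m)%N then s i ^+ 2 else 0.
Proof.
case: ifP => h.
  have hiR : (i < R)%N by case/andP: h => _ /leq_trans; apply; exact: geq_minr.
  rewrite (bigD1 (Ordinal hiR)) //= big1 ?addr0; first by rewrite DE eqxx h.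
  move=> j hj; rewrite DE; case: ifP => [/andP[e _]|_]; last by rewrite expr0n.
  by move: hj; rewrite -(inj_eq val_inj) /= eq_sym e.
by rewrite big1 // => j _; rewrite DE; case: ifP => [/andP[_ /andP[a b]]|_]; [move: h; rewrite a b | rewrite expr0n].
Qed.

Lemma E_frob : \sum_nu \sum_i (U i nu - W i nu) ^+ 2 = \sum_(r <= k < m) s k ^+ 2.
Proof.
have -> : \sum_nu \sum_i (U i nu - W i nu) ^+ 2 = \tr ((U - W)^T *m (U - W)).
  by rewrite /mxtrace; apply: eq_bigr => nu _; rewrite mxE; apply: eq_bigr => i _; rewrite !mxE expr2.
case: (hsvd) => hZ hV _ _ _.
rewrite UW_E !trmx_mul trmxK !mulmxA -[V *m _ *m _ *m Z]mulmxA hZ mulmx1.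
rewrite -!mulmxA mxtrace_mulC -!mulmxA hV mulmx1.
have -> : \tr (D^T *m D) = \sum_(i < n) \sum_(j < R) D i j ^+ 2.
  rewrite /mxtrace exchange_big; apply: eq_bigr => j _; rewrite mxE; apply: eq_bigr => i _.
  by rewrite !mxE expr2.
rewrite (eq_bigr (fun i : 'I_n => if (r <= i < m)%N then s i ^+ 2 else 0)); last by move=> i _; exact: row_sum.
rewrite -(big_mkord xpredT (fun i => if (r <= i < m)%N then s i ^+ 2 else 0)).
have hmn : (m <= n)%N by exact: geq_minl.
rewrite (big_cat_nat (leq0n m) hmn) /= [X in _ + X]big_nat_cond [X in _ + X]big1 ?addr0; last first.
  by move=> i /andP[/andP[hi _] _]; rewrite ltnNge hi andbF.
rewrite (big_cat_nat (leq0n r) hr) /= big_nat_cond big1 ?add0r; last first.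
  by move=> i /andP[/andP[_ hi] _]; rewrite leqNgt hi.
by apply: eq_big_nat => i /andP[-> ->].
Qed.

End SVD.


Lemma col_W_le1 (K : rcfType) n R (U : 'M[K]_(n, R)) Z s V r :
  is_svd U Z s V -> (r <= minn n R)%N -> forall nu,
  \sum_i U i nu ^+ 2 = 1 -> nrm (fun j => trunc_svd Z s V r j nu) <= 1.
Proof.
move=> hs hr nu h1.
rewrite /nrm -sqrtr1 ler_sqrt // -h1.
have o := WE_orth hs hr nu.
set W := trunc_svd Z s V r in o *.
have -> : \sum_i U i nu ^+ 2 = \sum_i W i nu ^+ 2 + 2 * \sum_i W i nu * (U i nu - W i nu)
     + \sum_i (U i nu - W i nu) ^+ 2.
  rewrite mulr_sumr -!big_split /=; apply: eq_bigr => i _; ring.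
rewrite o mulr0 addr0 lerDl; exact: sumsq_ge0.
Qed.

Lemma telesc (K : rcfType) (d : nat) (h : nat -> K) :
  h 0%N - h d = \sum_(m < d) (h m - h m.+1).
Proof.
rewrite -(big_mkord xpredT (fun m => h m - h m.+1)).
rewrite -[LHS]opprB -(telescope_sumr _ (leq0n d)) -sumrN.
by apply: eq_bigr => i _; rewrite opprB.
Qed.

Lemma main_bound (K : rcfType) (d n R : nat) (r : 'I_d -> nat) (xi : 'I_R -> K)
  (U : 'I_d -> 'M[K]_(n, R)) (Z : 'I_d -> 'M[K]_n) (s : 'I_d -> nat -> K)
  (V : 'I_d -> 'M[K]_R) :
  (forall l, (r l <= minn n R)%N) ->
  (forall l (nu : 'I_R), \sum_(i < n) U l i nu ^+ 2 = 1) ->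
  (forall l, is_svd (U l) (Z l) (s l) (V l)) ->
  tnorm (fun i => diag_tucker xi U i
              - diag_tucker xi (fun l => trunc_svd (Z l) (s l) (V l) (r l)) i)
  <= nrm xi * \sum_(l < d) Num.sqrt (\sum_(r l <= k < minn n R) s l k ^+ 2).
Proof.
move=> hr hU1 hs.
set W := fun l => trunc_svd (Z l) (s l) (V l) (r l).
have hW : forall l nu, nrm (fun j => W l j nu) <= 1.
  by move=> l nu; apply: col_W_le1 (hs l) (hr l) nu (hU1 l nu).
have hU : forall l nu, nrm (fun j => U l j nu) = 1.
  by move=> l nu; rewrite /nrm hU1 sqrtr1.
pose c (m : 'I_d) (nu : 'I_R) (l : 'I_d) (j : 'I_n) :=
  if (l < m)%N then W l j nu else if l == m then U l j nu - W l j nu else U l j nu.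
have key : forall i, diag_tucker xi U i - diag_tucker xi W i =
   \sum_nu \sum_(m < d) xi nu * \prod_l c m nu l (i l).
  move=> i; rewrite /diag_tucker -sumrB; apply: eq_bigr => nu _.
  rewrite -mulrBr -mulr_sumr; congr (_ * _).
  pose h (k : nat) := \prod_(l < d) (if (l < k)%N then W l (i l) nu else U l (i l) nu).
  have -> : \prod_l U l (i l) nu = h 0%N by apply: eq_bigr.
  have -> : \prod_l W l (i l) nu = h d by apply: eq_bigr => l _; rewrite ltn_ord.
  rewrite telesc; apply: eq_bigr => m _.
  rewrite /h (bigD1 m) //= [X in _ - X](bigD1 m) //= [RHS](bigD1 m) //=.
  rewrite /c ltnn eqxx mulrBl; congr (_ * _ - _ * _).
    by apply: eq_bigr => l hl; rewrite (negbTE hl).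
    by rewrite ltnSn.
  apply: eq_bigr => l hl; rewrite (negbTE hl) ltnS leq_eqVlt.
  have e : (l == m :> nat) = false by exact: negbTE hl.
  by rewrite e.
have tn : forall T : tensor K d n, tnorm T = nrm T by [].
rewrite tn (nrm_ext key).
have HH := (nrm_sum (fun nu (i : {ffun 'I_d -> 'I_n}) => \sum_(m < d) xi nu * \prod_l c m nu l (i l))).
apply: le_trans HH _.
apply: (@le_trans _ _ (\sum_nu \sum_(m < d) `|xi nu| * nrm (fun j => U m j nu - W m j nu))).
  apply: ler_sum => nu _.
  apply: le_trans (nrm_sum (fun m (i : {ffun 'I_d -> 'I_n}) => xi nu * \prod_l c m nu l (i l))) _.
  apply: ler_sum => m _.
  rewrite (nrm_scale (xi nu) (fun i : {ffun 'I_d -> 'I_n} => \prod_l c m nu l (i l))) nrm_rank1.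
  apply: ler_wpM2l => //.
  rewrite (bigD1 m) //=.
  have -> : nrm (c m nu m) = nrm (fun j => U m j nu - W m j nu).
    by apply: nrm_ext => j; rewrite /c ltnn eqxx.
  rewrite -[X in _ <= X]mulr1; apply: ler_wpM2l; first exact: nrm_ge0.
  apply: prodr_ile1 => l hl; rewrite nrm_ge0 /=.
  have -> : nrm (c m nu l) = if (l < m)%N then nrm (fun j => W l j nu) else 1.
    rewrite /c; case: ifP => _; first by apply: nrm_ext.
    by rewrite (negbTE hl) -(hU l nu).
  by case: ifP.
rewrite exchange_big /= mulr_sumr; apply: ler_sum => m _.
apply: le_trans (CS (fun nu => `|xi nu|) (fun nu => nrm (fun j => U m j nu - W m j nu))) _.
rewrite nrm_abs; apply: ler_wpM2l; first exact: nrm_ge0.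
rewrite -(E_frob (hs m) (hr m)) /nrm; rewrite le_eqVlt; apply/orP; left; apply/eqP; congr Num.sqrt; apply: eq_bigr => nu _.
by rewrite sqr_sqrtr ?sumsq_ge0.
Qed.


Lemma sq_A (K : rcfType) (d n R : nat) (xi : 'I_R -> K) (U : 'I_d -> 'M[K]_(n, R)) :
  \sum_i (diag_tucker xi U i) ^+ 2 =
  \sum_nu \sum_mu xi nu * xi mu * \prod_l (\sum_j U l j nu * U l j mu).
Proof.
rewrite /diag_tucker.
transitivity (\sum_(i : {ffun 'I_d -> 'I_n}) \sum_nu \sum_mu
   xi nu * xi mu * \prod_l (U l (i l) nu * U l (i l) mu)).
  apply: eq_bigr => i _; rewrite expr2 big_distrl /=; apply: eq_bigr => nu _.
  rewrite big_distrr /=; apply: eq_bigr => mu _; rewrite big_split /=; ring.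
rewrite exchange_big; apply: eq_bigr => nu _; rewrite exchange_big; apply: eq_bigr => mu _.
rewrite -mulr_sumr; congr (_ * _).
by rewrite (bigA_distr_bigA (fun l j => U l j nu * U l j mu)).
Qed.

Lemma xi_le (K : rcfType) (d n R : nat) (xi : 'I_R -> K) (U : 'I_d -> 'M[K]_(n, R)) :
  (forall l (nu : 'I_R), \sum_(i < n) U l i nu ^+ 2 = 1) ->
  (forall nu, xi nu ^+ 2 <= \sum_mu xi nu * xi mu * \prod_l (\sum_j U l j nu * U l j mu)) ->
  nrm xi <= tnorm (diag_tucker xi U).
Proof.
move=> _ h; rewrite /tnorm /nrm ler_sqrt ?sumsq_ge0 // sq_A.
by apply: ler_sum => nu _; exact: h.
Qed.

Lemma diagG (K : rcfType) (d n R : nat) (U : 'I_d -> 'M[K]_(n, R)) nu :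
  (forall l (nu : 'I_R), \sum_(i < n) U l i nu ^+ 2 = 1) ->
  \prod_l (\sum_j U l j nu * U l j nu) = 1.
Proof.
move=> h; rewrite big1 // => l _; rewrite -(h l nu); apply: eq_bigr => j _; by rewrite expr2.
Qed.

Lemma xi_le_orth (K : rcfType) (d n R : nat) (xi : 'I_R -> K) (U : 'I_d -> 'M[K]_(n, R)) :
  (forall l (nu : 'I_R), \sum_(i < n) U l i nu ^+ 2 = 1) ->
  (exists l0 : 'I_d, forall nu mu : 'I_R, nu != mu ->
        \sum_(i < n) U l0 i nu * U l0 i mu = 0) ->
  nrm xi <= tnorm (diag_tucker xi U).
Proof.
move=> hU [l0 ho].
have h : forall nu, xi nu ^+ 2 <= \sum_mu xi nu * xi mu * \prod_l (\sum_j U l j nu * U l j mu).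
  move=> nu.
  have hz : \sum_(mu | mu != nu) xi nu * xi mu * \prod_l (\sum_j U l j nu * U l j mu) = 0.
    apply: big1 => mu hmu; rewrite (bigD1 l0) //= ho ?mul0r ?mulr0 //.
    by rewrite eq_sym.
  by rewrite (bigD1 nu) //= diagG // hz addr0 mulr1 expr2.
exact: xi_le hU h.
Qed.

Lemma xi_le_mono (K : rcfType) (d n R : nat) (xi : 'I_R -> K) (U : 'I_d -> 'M[K]_(n, R)) :
  (forall l (nu : 'I_R), \sum_(i < n) U l i nu ^+ 2 = 1) ->
  (forall nu, 0 <= xi nu) ->
  (forall l i nu, 0 <= U l i nu) ->
  nrm xi <= tnorm (diag_tucker xi U).
Proof.
move=> hU hxi hU0.
have h : forall nu, xi nu ^+ 2 <= \sum_mu xi nu * xi mu * \prod_l (\sum_j U l j nu * U l j mu).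
  move=> nu; rewrite (bigD1 nu) //= diagG // mulr1 -expr2 lerDl.
  apply: sumr_ge0 => mu _; apply: mulr_ge0; first exact: mulr_ge0.
  apply: prodr_ge0 => l _; apply: sumr_ge0 => j _; exact: mulr_ge0.
exact: xi_le hU h.
Qed.

Lemma fin_step (K : rcfType) (d : nat) (a b c : K) (f : 'I_d -> K) :
  (forall l, 0 <= f l) -> a <= b * \sum_l f l -> b <= c -> a <= 1 * c * \sum_l f l.
Proof.
move=> hf h1 h2; apply: le_trans h1 _; rewrite mul1r; apply: ler_wpM2r => //.
exact: sumr_ge0.
Qed.

Unset Implicit Arguments.

Theorem corollary2p4 (K : realType) (d n R : nat)
  (hd : (2 <= d)%N) (hn : (1 <= n)%N) (hR : (1 <= R)%N) :
  (* (A) *)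
  (forall (r : 'I_d -> nat) (xi : 'I_R -> K) (U : 'I_d -> 'M[K]_(n, R))
          (Z : 'I_d -> 'M[K]_n) (s : 'I_d -> nat -> K) (V : 'I_d -> 'M[K]_R),
     (forall l, (r l <= minn n R)%N) ->
     (forall l (nu : 'I_R), \sum_(i < n) U l i nu ^+ 2 = 1) ->
     (forall l, is_svd (U l) (Z l) (s l) (V l)) ->
     (exists l0 : 'I_d, forall nu mu : 'I_R, nu != mu ->
        \sum_(i < n) U l0 i nu * U l0 i mu = 0) ->
     tnorm (fun i => diag_tucker xi U i
              - diag_tucker xi (fun l => trunc_svd (Z l) (s l) (V l) (r l)) i)
     <= 1 * tnorm (diag_tucker xi U) *
        \sum_(l < d) Num.sqrt (\sum_(r l <= k < minn n R) s l k ^+ 2))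
  /\
  (* (B) *)
  (exists C : K,
   forall (r : 'I_d -> nat) (xi : 'I_R -> K) (U : 'I_d -> 'M[K]_(n, R))
          (Z : 'I_d -> 'M[K]_n) (s : 'I_d -> nat -> K) (V : 'I_d -> 'M[K]_R),
     (forall l, (r l <= minn n R)%N) ->
     (forall l (nu : 'I_R), \sum_(i < n) U l i nu ^+ 2 = 1) ->
     (forall l, is_svd (U l) (Z l) (s l) (V l)) ->
     (forall nu, 0 <= xi nu) ->
     (forall l i nu, 0 <= U l i nu) ->
     tnorm (fun i => diag_tucker xi U i
              - diag_tucker xi (fun l => trunc_svd (Z l) (s l) (V l) (r l)) i)
     <= C * tnorm (diag_tucker xi U) *
        \sum_(l < d) Num.sqrt (\sum_(r l <= k < minn n R) s l k ^+ 2)).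
Proof.
split.
  move=> r xi U Z s V hr hU hs ho.
  have H1 := main_bound xi hr hU hs.
  have H2 := @xi_le_orth _ _ _ _ xi U hU ho.
  have H3 : forall l : 'I_d, 0 <= Num.sqrt (\sum_(r l <= k < minn n R) s l k ^+ 2).
    by move=> l; exact: sqrtr_ge0.
  exact: (fin_step H3 H1 H2).
exists 1 => r xi U Z s V hr hU hs hxi hU0.
have H1 := main_bound xi hr hU hs.
have H2 := @xi_le_mono _ _ _ _ xi U hU hxi hU0.
have H3 : forall l : 'I_d, 0 <= Num.sqrt (\sum_(r l <= k < minn n R) s l k ^+ 2).
  by move=> l; exact: sqrtr_ge0.
exact: (fin_step H3 H1 H2).
Qed.
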